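(* For each partial computable function $f:\mathbb{N}\to\mathbb{N}$ there exists a constant $c_f$ such that for all $n$ in the domain of $f$, $\alpha(\alpha(f(n)))\le \alpha(n)+c_f$.
   Context: Natural numbers are identified with finite binary strings. $\mathrm{K}$ denotes prefix-free Kolmogorov complexity with respect to a fixed optimal prefix-free machine $\mathbb{U}'$: $\mathrm{K}(x)=\min\{|y|:\mathbb{U}'(y)=x\}$, where $\mathbb{U}'$ has prefix-free domain and for every prefix-free machine $T$ there is $c_T$ with $\mathrm{K}(x)\le \min\{|y|:T(y)=x\}+c_T$. Solovay's $\alpha$-function is $\alpha(n)=\min\{\mathrm{K}(i) : i>n\}$. *)

(* Defs.v *)
From mathcomp Require Import all_boot.
From Stdlib Require Import ClassicalDescription.

Set Implicit Arguments.
Unset Strict Implicit.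
Unset Printing Implicit Defensive.

Inductive rf : Type :=
| Zero : rf
| Succ : rf
| Proj : nat -> rf
| Comp : rf -> list rf -> rf
| Prec : rf -> rf -> rf
| Mu   : rf -> rf.

Inductive eval : rf -> seq nat -> nat -> Prop :=
| eZero xs : eval Zero xs 0
| eSucc x xs : eval Succ (x :: xs) x.+1
| eProj i xs : i < size xs -> eval (Proj i) xs (nth 0 xs i)
| eComp f gs xs ys y : evals gs xs ys -> eval f ys y -> eval (Comp f gs) xs y
| ePrec0 g h xs y : eval g xs y -> eval (Prec g h) (0 :: xs) y
| ePrecS g h n xs r y :
    eval (Prec g h) (n :: xs) r -> eval h (n :: r :: xs) y ->
    eval (Prec g h) (n.+1 :: xs) y
| eMu f xs n :
    eval f (n :: xs) 0 ->
    (forall m, m < n -> exists k, eval f (m :: xs) k.+1) ->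
    eval (Mu f) xs n
with evals : seq rf -> seq nat -> seq nat -> Prop :=
| evNil xs : evals [::] xs [::]
| evCons g gs xs y ys : eval g xs y -> evals gs xs ys -> evals (g :: gs) xs (y :: ys).

Definition partial_computable (f : nat -> option nat) : Prop :=
  exists p : rf, forall n y, f n = Some y <-> eval p [:: n] y.

(* Natural numbers identified with binary strings: n <-> the binary    *)
(* expansion of n+1 with its leading 1 removed (0 <-> empty string,    *)
(* 1 <-> "0", 2 <-> "1", 3 <-> "00", ...).                             *)

Definition blen (n : nat) : nat := trunc_log 2 n.+1.

(* string x is a (non-strict) prefix of string y: deleting the last k
   bits of y gives x, i.e. (y+1) shifted right by k bits equals x+1. *)
Definition is_prefix (x y : nat) : Prop := exists k, y.+1 %/ 2 ^ k = x.+1.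

Definition prefix_free (T : nat -> option nat) : Prop :=
  forall x y, T x <> None -> T y <> None -> x <> y -> ~ is_prefix x y.

(* least natural number satisfying P (0 if none). *)
Definition minP (P : nat -> Prop) : nat :=
  match excluded_middle_informative (exists k, P k) with
  | left H =>
      @ex_minn (fun k => if excluded_middle_informative (P k) then true else false)
        (let: ex_intro k Hk := H in
         ex_intro _ k (match excluded_middle_informative (P k) as b
                             return (if b then true else false) = true with
                       | left _ => erefl | right nH => False_ind _ (nH Hk) end))
  | right _ => 0
  end.

Definition K (U : nat -> option nat) (x : nat) : nat :=
  minP (fun k => exists y, U y = Some x /\ blen y = k).

Definition optimal_pf_machine (U : nat -> option nat) : Prop :=
  [/\ partial_computable U, prefix_free U &
      forall T : nat -> option nat, partial_computable T -> prefix_free T ->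
        exists c, forall y x, T y = Some x ->
          K U x <= blen y + c].

Definition alpha (U : nat -> option nat) (n : nat) : nat :=
  minP (fun k => exists i, n < i /\ K U i = k).

(* Main.v *)
Require Import Defs.
From mathcomp Require Import all_boot zify.
From Stdlib Require Import Classical ClassicalDescription.

Lemma ev_Zero xs v : eval Zero xs v <-> v = 0.
Proof. split=> [H|->]; [by inversion H | constructor]. Qed.

Lemma ev_Succ x xs v : eval Succ (x :: xs) v <-> v = x.+1.
Proof. split=> [H|->]; [by inversion H | constructor]. Qed.

Lemma ev_Proj i xs v : i < size xs -> (eval (Proj i) xs v <-> v = nth 0 xs i).
Proof. move=> Hi; split=> [H|->]; [by inversion H | by constructor]. Qed.

Lemma ev_Comp1 f g xs v :
  eval (Comp f [:: g]) xs v <-> exists a, eval g xs a /\ eval f [:: a] v.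
Proof.
split=> [H|[a [H1 H2]]].
- inversion H as [| | |f' gs xs' ys y Hs Hf| | |]; subst.
  inversion Hs as [|g' gs' xs'' a ys' Ha Hs']; subst.
  inversion Hs'; subst. by exists a.
- econstructor; [econstructor; [exact H1| constructor]| exact H2].
Qed.

Lemma ev_Comp2 f g1 g2 xs v :
  eval (Comp f [:: g1; g2]) xs v <->
  exists a b, eval g1 xs a /\ eval g2 xs b /\ eval f [:: a; b] v.
Proof.
split=> [H|[a [b [H1 [H2 H3]]]]].
- inversion H as [| | |f' gs xs' ys y Hs Hf| | |]; subst.
  inversion Hs as [|g' gs' xs'' a ys' Ha Hs']; subst.
  inversion Hs' as [|g'' gs'' xs3 b ys'' Hb Hs'']; subst.
  inversion Hs''; subst. by exists a, b.
- econstructor; [econstructor; [exact H1| econstructor; [exact H2|constructor]]| exact H3].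
Qed.

Fixpoint PR (G : nat) (H : nat -> nat -> nat) (n : nat) : nat :=
  if n is n'.+1 then H n' (PR G H n') else G.

Lemma ev_Prec g h xs G H :
  (forall v, eval g xs v <-> v = G) ->
  (forall n r v, eval h (n :: r :: xs) v <-> v = H n r) ->
  forall n v, eval (Prec g h) (n :: xs) v <-> v = PR G H n.
Proof.
move=> Hg Hh; elim=> [|n IH] v /=.
- split=> [E|->].
  + inversion E as [| | | |g' h' xs' y Hy| |]; subst. by apply/Hg.
  + by constructor; apply/Hg.
- split=> [E|->].
  + inversion E as [| | | | |g' h' n' xs' r y Hr Hy|]; subst.
    move/IH: Hr => Hr; subst. by apply/Hh.
  + econstructor; [apply/IH; reflexivity | by apply/Hh].
Qed.

Lemma ev_P i xs v : eval (Proj i) xs v -> v = nth 0 xs i.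
Proof. by move=> H; inversion H. Qed.
Lemma ev_P' i xs : i < size xs -> eval (Proj i) xs (nth 0 xs i).
Proof. by constructor. Qed.

Definition padd := Prec (Proj 0) (Comp Succ [:: Proj 1]).
Lemma ev_add a b v : eval padd [:: a; b] v <-> v = a + b.
Proof.
have -> : a + b = PR b (fun _ r => r.+1) a by elim: a => //= a IH; rewrite addSn IH.
apply: ev_Prec => [w|n r w]; first by rewrite ev_Proj.
rewrite ev_Comp1; split=> [[z [Hz Hw]]|->].
- move/ev_P: Hz => /= Hz; subst. by move/ev_Succ: Hw.
- exists r; split; [by apply: (ev_P' _ _ _) | by apply/ev_Succ].
Qed.

Definition ppred := Prec Zero (Proj 0).
Lemma ev_pred a xs v : eval ppred (a :: xs) v <-> v = a.-1.
Proof.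
have -> : a.-1 = PR 0 (fun n _ => n) a by case: a.
apply: ev_Prec => [w|n r w]; first by rewrite ev_Zero.
by rewrite ev_Proj.
Qed.

Definition psub := Prec (Proj 0) (Comp ppred [:: Proj 1]).
Lemma ev_sub b a v : eval psub [:: b; a] v <-> v = a - b.
Proof.
have -> : a - b = PR a (fun _ r => r.-1) b.
  by elim: b => [|b IH] /=; rewrite ?subn0 // subnS IH.
apply: ev_Prec => [w|n r w]; first by rewrite ev_Proj.
rewrite ev_Comp1; split=> [[z [Hz Hw]]|->].
- move/ev_P: Hz => /= Hz; subst. by move/ev_pred: Hw.
- exists r; split; [by apply: (ev_P' _ _ _) | by apply/ev_pred].
Qed.

Definition ppow := Prec (Comp Succ [:: Comp Succ [:: Zero]]) (Comp padd [:: Proj 1; Proj 1]).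
Lemma ev_pow x y v : eval ppow [:: x; y] v <-> v = 2 ^ x.+1.
Proof.
have -> : 2 ^ x.+1 = PR 2 (fun _ r => r + r) x.
  by elim: x => [|x IH] //=; rewrite -IH expnS mul2n addnn.
apply: ev_Prec => [w|n r w].
- rewrite ev_Comp1; split=> [[z [Hz Hw]]|->].
  + move/ev_Comp1: Hz => [u [/ev_Zero Hu /ev_Succ Hz]]; subst. by move/ev_Succ: Hw.
  + exists 1; split; last by apply/ev_Succ.
    apply/ev_Comp1; exists 0; split; [by apply/ev_Zero | by apply/ev_Succ].
- rewrite ev_Comp2; split=> [[a [b [Ha [Hb Hw]]]]|->].
  + move/ev_P: Ha => /= Ha; move/ev_P: Hb => /= Hb; subst. by move/ev_add: Hw.
  + exists r, r; split; [by apply: (ev_P' _ _ _)|split; [by apply: (ev_P' _ _ _)|by apply/ev_add]].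
Qed.

Definition ptest := Comp padd [:: Comp psub [:: Proj 1; ppow]; Comp psub [:: ppow; Proj 1]].
Lemma ev_test x y v : eval ptest [:: x; y] v <-> v = (2 ^ x.+1 - y) + (y - 2 ^ x.+1).
Proof.
rewrite ev_Comp2; split=> [[a [b [Ha [Hb Hw]]]]|->].
- move/ev_Comp2: Ha => [a1 [a2 [/ev_P /= Ha1 [/ev_pow Ha2 /ev_sub Ha]]]].
  move/ev_Comp2: Hb => [b1 [b2 [/ev_pow Hb1 [/ev_P /= Hb2 /ev_sub Hb]]]].
  rewrite Ha1 Ha2 in Ha; rewrite Hb2 Hb1 in Hb; subst. by move/ev_add: Hw.
- exists (2 ^ x.+1 - y), (y - 2 ^ x.+1); split; [|split; last by apply/ev_add].
  + apply/ev_Comp2; exists y, (2 ^ x.+1); split; [by apply: (ev_P' _ _ _)|split; [by apply/ev_pow|by apply/ev_sub]].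
  + apply/ev_Comp2; exists (2 ^ x.+1), y; split; [by apply/ev_pow|split; [by apply: (ev_P' _ _ _)|by apply/ev_sub]].
Qed.

Lemma test0 x y : ((2 ^ x.+1 - y) + (y - 2 ^ x.+1) == 0) = (y == 2 ^ x.+1).
Proof. by rewrite addn_eq0 !subn_eq0 eq_sym eqn_leq andbC. Qed.

Lemma ev_mu y v : eval (Mu ptest) [:: y] v <-> y = 2 ^ v.+1.
Proof.
split=> [H|->].
- inversion H as [| | | | | |f xs n Hz Hm]; subst.
  move/ev_test/esym/eqP: Hz; rewrite test0 => /eqP //.
- constructor; first by apply/ev_test; rewrite subnn.
  move=> m Hm; exists ((2 ^ m.+1 - 2 ^ v.+1) + (2 ^ v.+1 - 2 ^ m.+1)).-1.
  apply/ev_test; rewrite prednK // lt0n test0.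
  by rewrite eqn_exp2l // eqSS neq_ltn Hm orbT.
Qed.

Lemma minP_le (P : nat -> Prop) k : P k -> minP P <= k.
Proof.
move=> Hk; rewrite /minP; case: excluded_middle_informative => [H|nH]; last by [].
case: ex_minnP => m _ Hmin; apply: Hmin.
by case: excluded_middle_informative.
Qed.

Lemma minP_spec (P : nat -> Prop) : (exists k, P k) -> P (minP P).
Proof.
move=> Hex; rewrite /minP; case: excluded_middle_informative => [H|nH]; last by [].
case: ex_minnP => m Hm _; move: Hm.
by case: excluded_middle_informative.
Qed.

Lemma minP_none (P : nat -> Prop) : ~ (exists k, P k) -> minP P = 0.
Proof. by move=> nH; rewrite /minP; case: excluded_middle_informative. Qed.

Lemma K_le U y x : U y = Some x -> K U x <= blen y.
Proof. by move=> H; apply: minP_le; exists y. Qed.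

Lemma K_spec U x : (exists y, U y = Some x) -> exists y, U y = Some x /\ blen y = K U x.
Proof. move=> [y Hy]; apply: (minP_spec (fun k => exists y, U y = Some x /\ blen y = k)).
by exists (blen y), y. Qed.

Lemma K_none U x : ~ (exists y, U y = Some x) -> K U x = 0.
Proof. move=> nH; apply: minP_none => -[k [y [Hy _]]]; apply: nH; by exists y. Qed.

Lemma alpha_le U n i : n < i -> alpha U n <= K U i.
Proof. by move=> H; apply: minP_le; exists i. Qed.

Lemma alpha_spec U n : exists i, n < i /\ K U i = alpha U n.
Proof. apply: (minP_spec (fun k => exists i, n < i /\ K U i = k)).
by exists (K U n.+1), n.+1. Qed.

Definition T3 (y : nat) : option nat :=
  if (1 < y) && (2 ^ trunc_log 2 y == y) then Some (trunc_log 2 y).-1 else None.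

Lemma T3E y x : T3 y = Some x <-> y = 2 ^ x.+1.
Proof.
rewrite /T3; split.
- case: ifP => // /andP [H1 /eqP H2] [<-].
  case E: (trunc_log 2 y) H2 => [|t] /= H2; last by [].
  by move: H1; rewrite -H2.
- move=> ->; rewrite trunc_expnK // eqxx /=.
  by rewrite (@ltn_exp2l 2 0 x.+1).
Qed.

Lemma T3_comp : partial_computable T3.
Proof. exists (Mu ptest) => n y; rewrite T3E; split; by move/ev_mu. Qed.

Lemma blen_pow x : blen (2 ^ x.+1) = x.+1.
Proof.
rewrite /blen; apply: trunc_log_eq => //.
rewrite leqnSn /= (expnS 2 x.+1).
have : 1 < 2 ^ x.+1 by rewrite (@ltn_exp2l 2 0 x.+1).
move: (2 ^ x.+1) => t; lia.
Qed.

Lemma pow_not_prefix a b : a <> b -> ~ is_prefix (2 ^ a.+1) (2 ^ b.+1).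
Proof.
move=> nab [k Hk].
case: k Hk => [|k] Hk.
  rewrite expn0 divn1 in Hk; move: Hk => [] /eqP; rewrite eqn_exp2l // eqSS => /eqP Hba.
  by apply: nab.
have Hd : 0 < 2 ^ k.+1 by rewrite expn_gt0.
have H1 : 1 %/ 2 ^ k.+1 = 0 by rewrite divn_small // (@ltn_exp2l 2 0 k.+1).
case: (leqP k.+1 b.+1) => Hkb.
- have E : 2 ^ b.+1 = 2 ^ (b.+1 - k.+1) * 2 ^ k.+1 by rewrite -expnD subnK.
  move: Hk; rewrite E -addn1 divnMDl // H1 addn0.
  case E2: (b.+1 - k.+1) => [|j].
    by rewrite expn0 => /eqP; rewrite eqSS eq_sym expn_eq0.
  by move=> /(congr1 odd); rewrite /= !oddX.
- move: Hk; rewrite divn_small // -addn1.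
  apply: (@leq_trans (2 ^ b.+1 * 2)); first by rewrite muln2 -addnn ltn_add2l (@ltn_exp2l 2 0 b.+1).
  by rewrite -expnSr leq_exp2l.
Qed.

Lemma T3_pf : prefix_free T3.
Proof.
move=> x y Hx Hy nxy.
case Ex: (T3 x) Hx => [a|] // _; case Ey: (T3 y) Hy => [b|] // _.
move/T3E: Ex => Ex; move/T3E: Ey => Ey; subst.
apply: pow_not_prefix => Eab; apply: nxy; by rewrite Eab.
Qed.

Fixpoint itS (k : nat) (p : rf) : rf :=
  if k is k'.+1 then Comp Succ [:: itS k' p] else p.

Lemma ev_itS k p xs v : eval (itS k p) xs v <-> exists u, eval p xs u /\ v = k + u.
Proof.
elim: k v => [|k IH] v /=.
- split=> [H|[u [H ->]]] //; by exists v.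
- rewrite ev_Comp1; split=> [[a [/IH [u [Hu ->]] /ev_Succ ->]]|[u [Hu ->]]].
  + by exists u; split.
  + exists (k + u); split; [apply/IH; by exists u | by apply/ev_Succ].
Qed.

Definition V1 (U f : nat -> option nat) (q : nat) : option nat :=
  match U q with Some x => omap succn (f x) | None => None end.

Lemma V1_comp U f : partial_computable U -> partial_computable f ->
  partial_computable (V1 U f).
Proof.
move=> [pU HU] [pf Hf]; exists (Comp Succ [:: Comp pf [:: pU]]) => n y.
rewrite /V1 ev_Comp1; split.
- case EU: (U n) => [x|] //; case Ef: (f x) => [z|] //= [<-].
  exists z; split; last by apply/ev_Succ.
  apply/ev_Comp1; exists x; split; [by apply/HU | by apply/Hf].
- move=> [z [/ev_Comp1 [x [/HU -> /Hf ->]] /ev_Succ ->]] //.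
Qed.

Lemma V1_pf U f : prefix_free U -> prefix_free (V1 U f).
Proof.
move=> HU x y Hx Hy; apply: HU.
- by move: Hx; rewrite /V1; case: (U x).
- by move: Hy; rewrite /V1; case: (U y).
Qed.

Definition V2 (U : nat -> option nat) (c : nat) (p : nat) : option nat :=
  omap (addn c) (U p).

Lemma V2_comp U c : partial_computable U -> partial_computable (V2 U c).
Proof.
move=> [pU HU]; exists (itS c pU) => n y.
rewrite /V2 ev_itS; split.
- case EU: (U n) => [x|] //= [<-]; exists x; split=> //; by apply/HU.
- by move=> [u [/HU -> ->]].
Qed.

Lemma V2_pf U c : prefix_free U -> prefix_free (V2 U c).
Proof.
move=> HU x y Hx Hy; apply: HU.
- by move: Hx; rewrite /V2; case: (U x).
- by move: Hy; rewrite /V2; case: (U y).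
Qed.

Theorem lemma2 (U : nat -> option nat) (HU : optimal_pf_machine U)
  (f : nat -> option nat) (Hf : partial_computable f) :
  exists c : nat, forall n m : nat, f n = Some m ->
    alpha U (alpha U m) <= alpha U n + c.
Proof.
case: HU => HUc HUpf opt.
have [c3 H3] := opt _ T3_comp T3_pf.
have K3 x : K U x <= x.+1 + c3.
  rewrite -(blen_pow x); apply: H3; exact/T3E.
have [c1 H1] := opt _ (@V1_comp U f HUc Hf) (@V1_pf U f HUpf).
pose c2 := c1 + c3 + 2.
have [c4 H4] := opt _ (@V2_comp U c2 HUc) (@V2_pf U c2 HUpf).
case: (classic (exists N, forall x, ~ (exists y, U y = Some x) -> x <= N)) => [[N HN]|nN].
- pose D := \max_(k < N.+1) (if f k is Some m then alpha U (alpha U m) else 0).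
  exists (D + c4) => n m Hnm.
  case: (leqP n N) => HnN.
  + have HD : alpha U (alpha U m) <= D.
      have := leq_bigmax (F := fun k : 'I_N.+1 =>
                 if f k is Some m then alpha U (alpha U m) else 0) (Ordinal (HnN : n < N.+1)).
      by rewrite /= Hnm.
    apply: (leq_trans HD); lia.
  + have Wn : exists y, U y = Some n.
      apply: NNPP => nW; have := HN _ nW; by rewrite leqNgt HnN.
    have [q [Hq Hbq]] := @K_spec U n Wn.
    have Km : K U m.+1 <= K U n + c1.
      rewrite -Hbq; apply: H1; by rewrite /V1 Hq Hnm.
    have Am : alpha U m <= K U m.+1 by apply: alpha_le.
    have [i [Hni Ki]] := alpha_spec U n.
    have Wi : exists y, U y = Some i.
      apply: NNPP => nW; have := HN _ nW; rewrite leqNgt.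
      by rewrite (ltn_trans HnN Hni).
    have [p [Hp Hbp]] := @K_spec U i Wi.
    have Kc : K U (c2 + i) <= blen p + c4.
      apply: H4; by rewrite /V2 Hp.
    have Aa : alpha U (alpha U m) <= K U (c2 + i).
      apply: alpha_le; have := K3 n; rewrite /c2; lia.
    rewrite Hbp Ki in Kc; lia.
- have A0 x : alpha U x = 0.
  apply/eqP; rewrite -leqn0.
  have [j [Hj Wj]] : exists j, x < j /\ ~ (exists y, U y = Some j).
    apply: NNPP => H; apply: nN; exists x => z Hz.
    rewrite leqNgt; apply/negP => Hxz; apply: H; by exists z.
  by rewrite -(@K_none U j Wj); apply: alpha_le.
  exists 0 => n m _; by rewrite !A0.
Qed.
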